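(* Let $X$ be a real Banach space, $k\in\mathbb N$, and $Y,Z$ closed subspaces with $Z\subseteq Y\subseteq X$. Suppose $Z$ is an $M$-ideal in $X$ and $Y/Z$ has property-$(k-U)$ in $X/Z$. Then $Y$ has property-$(k-U)$ in $X$.
   Context: $Z^\perp=\{x^*\in X^*:x^*|_Z=0\}$. $Z$ is an $M$-ideal in $X$ if there is a closed subspace $G$ of $X^*$ with $X^*=Z^\perp\oplus G$ and $\|u+g\|=\|u\|+\|g\|$ for $u\in Z^\perp,g\in G$. For a closed subspace $V$ of $E$ and $v^*\in V^*$, $HB(v^* )=\{e^*\in E^*:e^*|_V=v^*,\ \|e^*\|=\|v^*\|\}$; for a set $A$ and $a\in A$, $\dim A=\dim\operatorname{span}(A-a)$. $V$ has property-$(k-U)$ in $E$ if $\dim HB(v^* )\le k-1$ for all $v^*\in S_{V^*}$. $Y/Z$ is regarded as a subspace of $X/Z$ with the quotient norm. *)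

(* Defs.v *)
From HB Require Import structures.
From mathcomp Require Import all_boot all_order all_algebra.
From mathcomp Require Import all_classical all_reals all_analysis.
Set Implicit Arguments. Unset Strict Implicit. Unset Printing Implicit Defensive.
Import Order.TTheory GRing.Theory Num.Theory.
Import numFieldNormedType.Exports.
Local Open Scope classical_set_scope.
Local Open Scope ring_scope.

Section Defs.
Context {R : realType} {X : normedModType R}.

Definition is_subspace (V : set X) : Prop :=
  V 0 /\ forall (a : R) (x y : X), V x -> V y -> V (a *: x + y).

(* Functionals on X are functions X -> R.  The ambient space is X equipped
   with a seminorm p: p = norm gives X itself, p = qnorm Z gives the
   quotient X/Z (functionals bounded w.r.t. qnorm Z are exactly the
   compositions of functionals on X/Z with the quotient map). *)

Definition fun_on (V : set X) (p : X -> R) (f : X -> R) : Prop :=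
  (forall (a : R) (x y : X), V x -> V y -> f (a *: x + y) = a * f x + f y) /\
  exists C : R, forall x, V x -> `|f x| <= C * p x.

Definition dual (p : X -> R) (f : X -> R) : Prop := fun_on setT p f.

Definition opnorm (V : set X) (p : X -> R) (f : X -> R) : R :=
  sup [set `|f x| | x in [set x | V x /\ p x <= 1]].

Definition qnorm (Z : set X) (x : X) : R := inf [set `|x - z| | z in Z].

Definition HB (V : set X) (p : X -> R) (f : X -> R) : set (X -> R) :=
  [set g | dual p g /\ (forall v, V v -> g v = f v) /\
           opnorm setT p g = opnorm V p f].

(* dim A <= n, where dim A = dim span (A - a), a in A *)
Definition dim_le (A : set (X -> R)) (n : nat) : Prop :=
  forall a, A a -> exists gs : 'I_n -> X -> R,
    forall b, A b -> exists c : 'I_n -> R,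
      forall x, b x - a x = \sum_(i < n) c i * gs i x.

Definition propkU (V : set X) (p : X -> R) (k : nat) : Prop :=
  forall f, fun_on V p f -> opnorm V p f = 1 -> dim_le (HB V p f) k.-1.

Definition dnorm (f : X -> R) : R := opnorm setT (fun x => `|x|) f.

Definition perp (Z : set X) : set (X -> R) :=
  [set f | dual (fun x => `|x|) f /\ forall z, Z z -> f z = 0].

Definition M_ideal (Z : set X) : Prop :=
  exists G : set (X -> R),
    (forall g, G g -> dual (fun x => `|x|) g) /\
    G (fun _ => 0) /\
    (forall (a : R) g h, G g -> G h -> G (fun x => a * g x + h x)) /\
    (forall (gs : nat -> X -> R) g, (forall n, G (gs n)) ->
       dual (fun x => `|x|) g ->
       (fun n => dnorm (fun x => gs n x - g x)) @ \oo --> (0 : R) -> G g) /\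
    (forall f, dual (fun x => `|x|) f ->
       exists u g, perp Z u /\ G g /\ f = (fun x => u x + g x)) /\
    (forall f, perp Z f -> G f -> f = (fun _ => 0)) /\
    (forall u g, perp Z u -> G g ->
       dnorm (fun x => u x + g x) = dnorm u + dnorm g).

End Defs.

(* Main.v *)
Require Import Defs.
From HB Require Import structures.
From mathcomp Require Import all_boot all_order all_algebra.
From mathcomp Require Import all_classical all_reals all_analysis.
Import Order.TTheory GRing.Theory Num.Theory.
Import numFieldNormedType.Exports.
From mathcomp Require Import ring lra.
Local Open Scope classical_set_scope.
Local Open Scope ring_scope.

Section Aux.
Local Set Implicit Arguments. Local Unset Strict Implicit.
Context {R : realType} {X : normedModType R}.
Implicit Types (V Y Z : set X) (p : X -> R) (f u : X -> R).

Definition glin f := forall (a : R) (x y : X), f (a *: x + y) = a * f x + f y.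

Lemma glin0 f : glin f -> f 0 = 0.
Proof.
move=> lf; have h := lf 1 0 0; rewrite scale1r addr0 mul1r in h.
by apply: (addrI (f 0)); rewrite addr0 -h.
Qed.

Lemma glinZ f a x : glin f -> f (a *: x) = a * f x.
Proof. by move=> lf; have := lf a x 0; rewrite addr0 (glin0 lf) addr0. Qed.

Lemma glinB f x y : glin f -> f (x - y) = f x - f y.
Proof.
by move=> lf; have := lf (-1) y x; rewrite scaleN1r addrC => ->; rewrite mulN1r addrC.
Qed.

Lemma glinD f x y : glin f -> f (x + y) = f x + f y.
Proof. by move=> lf; have := lf 1 x y; rewrite scale1r mul1r. Qed.

Lemma opn_ub V p f C : (forall x, V x -> p x <= 1 -> `|f x| <= C) ->
  forall x, V x -> p x <= 1 -> `|f x| <= opnorm V p f.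
Proof.
move=> hC x Vx px; apply: ub_le_sup; last by exists x.
by exists C => _ [y [Vy py] <-]; exact: hC.
Qed.

Lemma opn_le V p f M : V 0 -> p 0 <= 1 ->
  (forall x, V x -> p x <= 1 -> `|f x| <= M) -> opnorm V p f <= M.
Proof.
move=> V0 p0 hM; apply: ge_sup; first by exists `|f 0|, 0.
by move=> _ [y [Vy py] <-]; exact: hM.
Qed.



Lemma bd_of V p f C : (forall x, 0 <= p x) -> (forall x, V x -> `|f x| <= C * p x) ->
  forall x, V x -> p x <= 1 -> `|f x| <= `|C|.
Proof.
move=> p0 hC x Vx px; apply: (le_trans (hC x Vx)).
apply: (le_trans (ler_norm _)); rewrite normrM (ger0_norm (p0 x)).
by rewrite -[leRHS]mulr1 ler_wpM2l.
Qed.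


Lemma qn_ge0 Z x : Z 0 -> 0 <= qnorm Z x.
Proof. by move=> Z0; apply: lb_le_inf; [exists `|x - 0|, 0 | move=> _ [z _ <-]]. Qed.

Lemma qn_le Z x z : Z z -> qnorm Z x <= `|x - z|.
Proof.
move=> Zz; apply: ge_inf; last by exists z.
by exists 0 => _ [w _ <-].
Qed.

Lemma qn_lt Z x r : Z 0 -> qnorm Z x < r -> exists2 z, Z z & `|x - z| < r.
Proof.
move=> Z0 /inf_lt [|_ [z Zz <-] h]; first by exists `|x - 0|, 0.
by exists z.
Qed.

Lemma qn0 Z : Z 0 -> qnorm Z 0 = 0.
Proof.
move=> Z0; apply/le_anti; rewrite qn_ge0 // andbT.
by apply: (le_trans (@qn_le Z 0 0 Z0)); rewrite subr0 normr0.
Qed.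

Lemma dual_bd u : dual (fun x => `|x|) u -> exists2 C, 0 < C & forall x, `|u x| <= C * `|x|.
Proof.
move=> [_ [C hC]]; exists (`|C| + 1); first by rewrite ltr_wpDl.
move=> x; apply: (le_trans (hC x I)); apply: ler_wpM2r => //.
by apply: (le_trans (ler_norm _)); rewrite lerDl.
Qed.

Lemma perp_glin Z u : perp Z u -> glin u.
Proof. by move=> [[hl _] _] a x y; apply: hl. Qed.

Lemma perp_qbd Z u : is_subspace Z -> perp Z u ->
  exists2 C, 0 < C & forall x, `|u x| <= C * qnorm Z x.
Proof.
move=> [Z0 _] hu; have lu := perp_glin hu.
have [C C0 hC] := dual_bd hu.1; exists C => // x.
rewrite -ler_pdivrMl //; apply: lb_le_inf; first by exists `|x - 0|, 0.
move=> _ [z Zz <-]; rewrite ler_pdivrMl //.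
have -> : u x = u (x - z).
  by rewrite (glinB x z lu) (hu.2 z Zz) subr0.
exact: hC.
Qed.


Lemma subZ V a x : is_subspace V -> V x -> V (a *: x).
Proof. by move=> [V0 hV] Vx; have := hV a x 0 Vx V0; rewrite addr0. Qed.

Lemma subB V x y : is_subspace V -> V x -> V y -> V (x - y).
Proof. by move=> [V0 hV] Vx Vy; have := hV (-1) y x Vy Vx; rewrite scaleN1r addrC. Qed.

Lemma F5 Y Z u : is_subspace Y -> is_subspace Z -> Z `<=` Y -> perp Z u ->
  opnorm Y (qnorm Z) u = opnorm Y (fun x => `|x|) u.
Proof.
move=> sY sZ ZY hu; have lu := perp_glin hu.
have Y0 := sY.1; have Z0 := sZ.1.
have [C C0 hC] := dual_bd hu.1.
have [Cq Cq0 hCq] := perp_qbd sZ hu.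
have B1 : forall x, Y x -> `|x| <= 1 -> `|u x| <= `|C|.
  by apply: bd_of => //; move=> x _; exact: hC.
have B2 : forall x, Y x -> qnorm Z x <= 1 -> `|u x| <= `|Cq|.
  apply: bd_of; first by move=> x; exact: qn_ge0.
  by move=> x _; exact: hCq.
set M := opnorm Y (fun x => `|x|) u.
have M0 : 0 <= M.
  have h := opn_ub B1 Y0; rewrite (glin0 lu) !normr0 in h; exact: h ler01.
apply/le_anti/andP; split.
  apply: opn_le => //; first by rewrite qn0 // ler01.
  move=> x Yx qx; apply/ler_addgt0Pr => e e0.
  have M1 : 0 < M + 1 by rewrite ltr_wpDl.
  set t := 1 + e / (M + 1).
  have t0 : 0 < t by rewrite ltr_wpDr ?divr_ge0 ?ltW.
  have [z Zz hz] : exists2 z, Z z & `|x - z| < t.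
    by apply: qn_lt => //; apply: (le_lt_trans qx); rewrite ltrDl divr_gt0.
  have Yw : Y (t^-1 *: (x - z)) by apply: subZ => //; apply: subB => //; exact: ZY.
  have hw : `|t^-1 *: (x - z)| <= 1.
    rewrite normrZ ger0_norm; last by rewrite invr_ge0 ltW.
    by rewrite mulrC ler_pdivrMr // mul1r ltW.
  have h := opn_ub B1 Yw hw.
  rewrite (glinZ _ _ lu) (glinB _ _ lu) (hu.2 z Zz) subr0 normrM ger0_norm in h;
    last by rewrite invr_ge0 ltW.
  rewrite mulrC ler_pdivrMr // in h.
  apply: (le_trans h); rewrite /t mulrDr mulr1 lerD2l mulrA ler_pdivrMr //.
  rewrite [M * e]mulrC; apply: ler_wpM2l; first exact: ltW.
  by rewrite lerDl ler01.
apply: opn_le => //; first by rewrite normr0 ler01.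
move=> x Yx nx; apply: (opn_ub B2 Yx).
by apply: (le_trans (qn_le x Z0)); rewrite subr0.
Qed.


Lemma opn_scale V p f c C : V 0 -> p 0 <= 1 -> 0 < c ->
  (forall x, V x -> p x <= 1 -> `|f x| <= C) ->
  opnorm V p (fun x => f x / c) = opnorm V p f / c.
Proof.
move=> V0 p0 c0 hC; have ic : 0 <= c^-1 by rewrite invr_ge0 ltW.
have hC' : forall x, V x -> p x <= 1 -> `|f x / c| <= C / c.
  move=> x Vx px; rewrite normrM (ger0_norm ic); apply: ler_wpM2r => //.
  exact: hC.
apply/le_anti/andP; split.
  apply: opn_le => // x Vx px; rewrite normrM (ger0_norm ic).
  by apply: ler_wpM2r => //; exact: (opn_ub hC).
rewrite ler_pdivrMr //; apply: opn_le => // x Vx px.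
rewrite -ler_pdivrMr //; have := opn_ub hC' Vx px.
by rewrite normrM (ger0_norm ic).
Qed.

Lemma opn_mono V W p f C : V `<=` W -> V 0 -> p 0 <= 1 ->
  (forall x, W x -> p x <= 1 -> `|f x| <= C) ->
  opnorm V p f <= opnorm W p f.
Proof.
move=> VW V0 p0 hC; apply: opn_le => // x Vx px.
by apply: (opn_ub hC) => //; exact: VW.
Qed.

Lemma opn_sum V p f g h C1 C2 : V 0 -> p 0 <= 1 ->
  (forall x, V x -> f x = g x + h x) ->
  (forall x, V x -> p x <= 1 -> `|g x| <= C1) ->
  (forall x, V x -> p x <= 1 -> `|h x| <= C2) ->
  opnorm V p f <= opnorm V p g + opnorm V p h.
Proof.
move=> V0 p0 e h1 h2; apply: opn_le => // x Vx px.
rewrite e //; apply: (le_trans (ler_normD _ _)).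
by apply: lerD; [exact: (opn_ub h1) | exact: (opn_ub h2)].
Qed.

Lemma dual_bd1 V u : dual (fun x => `|x|) u ->
  exists C, forall x, V x -> `|x| <= 1 -> `|u x| <= C.
Proof.
move=> du; have [C _ hC] := dual_bd du; exists `|C|.
by apply: bd_of => // x _; exact: hC.
Qed.

Lemma perp_bd1 V Z u : is_subspace Z -> perp Z u ->
  exists C, forall x, V x -> qnorm Z x <= 1 -> `|u x| <= C.
Proof.
move=> sZ pu; have [C _ hC] := perp_qbd sZ pu; exists `|C|.
apply: bd_of => //; first by move=> x; exact: qn_ge0 sZ.1.
Qed.

Lemma dnorm0 u : dual (fun x => `|x|) u -> dnorm u <= 0 -> forall x, u x = 0.
Proof.
move=> du hn x; have lu : glin u by move=> a y z; apply: du.1.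
have [->|x0] := eqVneq x 0; first exact: glin0.
have [C hC] := dual_bd1 setT du.
have n1 : `|((`|x|)^-1 *: x)| <= 1 by rewrite normfZV.
have h := opn_ub hC I n1.
have : `|u (`|x|^-1 *: x)| <= 0 by apply: le_trans h hn.
rewrite normr_le0 glinZ // mulf_eq0 invr_eq0 normr_eq0 (negbTE x0) /=.
by move/eqP.
Qed.

Lemma dnorm_ge0 u : dual (fun x => `|x|) u -> 0 <= dnorm u.
Proof.
move=> du; have lu : glin u by move=> a y z; apply: du.1.
have [C hC] := dual_bd1 setT du.
have h : `|u 0| <= dnorm u by apply: (opn_ub hC); rewrite // normr0 ler01.
by rewrite (glin0 lu) normr0 in h.
Qed.

End Aux.

Theorem theorem4p9 (R : realType) (X : completeNormedModType R) (k : nat)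
  (Y Z : set X) :
  (0 < k)%N ->
  is_subspace Y -> closed Y -> is_subspace Z -> closed Z -> Z `<=` Y ->
  M_ideal Z ->
  propkU Y (qnorm Z) k ->
  propkU Y (fun x => `|x|) k.
Proof.
move=> k0 sY cY sZ cZ ZY [G [Gd [G0 [Glin [_ [Gdec [Gint Gnorm]]]]]]] hyp.
move=> f [flin [Cf hCf]] fn1 a [ad [aY an]].
have Y0 := sY.1; have Z0 := sZ.1.
have sT : is_subspace (@setT X) by [].
have [ua [ga [pua [Gga ea]]]] := Gdec a ad.
have key : forall b, HB Y (fun x => `|x|) f b ->
    exists2 ub, perp Z ub & b = (fun x => ub x + ga x).
  move=> b [bd [bY bn]].
  have [ub [gb [pub [Ggb eb]]]] := Gdec b bd.
  have Gd' := Glin (-1) ga gb Gga Ggb.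
  have pd : perp Z (fun x => -1 * ga x + gb x).
    split; first exact: Gd.
    move=> z Zz; have Yz := ZY z Zz.
    have h1 : a z = ua z + ga z by rewrite ea.
    have h2 : b z = ub z + gb z by rewrite eb.
    rewrite (pua.2 z Zz) add0r aY // in h1.
    rewrite (pub.2 z Zz) add0r bY // in h2.
    by rewrite -h1 -h2 mulN1r addNr.
  have hz := Gint _ pd Gd'.
  exists ub => //; rewrite eb; apply: funext => x.
  have := congr1 (fun F => F x) hz => /= /eqP.
  by rewrite mulN1r addrC subr_eq0 => /eqP ->.
have gad := Gd ga Gga.
have na : dnorm ua + dnorm ga = 1.
  by rewrite -(Gnorm ua ga pua Gga) -ea /dnorm an fn1.
have nb : forall ub, perp Z ub -> HB Y (fun x => `|x|) f (fun x => ub x + ga x) ->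
    dnorm ub = dnorm ua.
  move=> ub pub [_ [_ bn]]; apply: (addIr (dnorm ga)); rewrite na.
  by rewrite -(Gnorm ub ga pub Gga) /dnorm bn fn1.
have [C1 h1] := dual_bd1 Y pua.1.
have [C2 h2] := dual_bd1 Y gad.
have [C1' h1'] := dual_bd1 setT pua.1.
have [C2' h2'] := dual_bd1 setT gad.
have n01 : `|0 : X| <= 1 by rewrite normr0 ler01.
have s1 := @opn_sum _ _ Y (fun x => `|x|) f ua ga C1 C2 Y0 n01
   (fun x Yx => etrans (esym (aY x Yx)) (congr1 (fun F => F x) ea)) h1 h2.
have m1 := @opn_mono _ _ Y setT (fun x => `|x|) ua C1' (@subsetT _ Y) Y0 n01 h1'.
have m2 := @opn_mono _ _ Y setT (fun x => `|x|) ga C2' (@subsetT _ Y) Y0 n01 h2'.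
rewrite fn1 in s1.
have eqY : opnorm Y (fun x => `|x|) ua = dnorm ua.
  rewrite /dnorm in na *; lra.
set c := dnorm ua in na nb eqY.
have [cpos|cle] := ltrP 0 c; last first.
  exists (fun _ _ => 0) => b hb; have [ub pub eb] := key b hb.
  have ub0 := dnorm0 pub.1; have ua0 := dnorm0 pua.1 cle.
  rewrite eb in hb; rewrite nb // in ub0; have {}ub0 := ub0 cle.
  exists (fun _ => 0) => x; rewrite eb ea /= ub0 ua0 subrr big1 // => i _.
  by rewrite mul0r.
have c0 : c != 0 by rewrite gt_eqF.
have nq0 : qnorm Z 0 <= 1 by rewrite qn0 // ler01.
have dq : forall u, perp Z u -> dual (qnorm Z) (fun x => u x / c).
  move=> u pu; have lu := perp_glin pu; split.
    by move=> r x y _ _; rewrite lu mulrDl mulrA.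
  have [C _ hC] := perp_qbd sZ pu; exists (C / c) => x _.
  have ic : 0 <= c^-1 by rewrite invr_ge0 ltW.
  rewrite normrM (ger0_norm ic) mulrAC.
  by apply: ler_wpM2r; [rewrite invr_ge0 ltW | exact: hC].
have qY : opnorm Y (qnorm Z) (fun x => ua x / c) = 1.
  have [C hC] := perp_bd1 Y sZ pua.
  by rewrite (opn_scale Y0 nq0 cpos hC) (F5 sY sZ ZY pua) eqY divff.
have HBu : forall u, perp Z u -> (forall v, Y v -> u v = ua v) -> dnorm u = c ->
    HB Y (qnorm Z) (fun x => ua x / c) (fun x => u x / c).
  move=> u pu uY du; split; first exact: dq.
  split; first by move=> v Yv; rewrite uY.
  have [C hC] := perp_bd1 setT sZ pu.
  rewrite qY (opn_scale I nq0 cpos hC) (F5 sT sZ (@subsetT _ Z) pu).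
  by rewrite -/(dnorm u) du divff.
have fo : fun_on Y (qnorm Z) (fun x => ua x / c).
  have [lin [C hC]] := dq ua pua; split; first by move=> r x y _ _; exact: lin.
  by exists C => x _; exact: hC.
have [gs hgs] := hyp _ fo qY _ (HBu ua pua (fun _ _ => erefl) erefl).
exists gs => b hb; have [ub pub eb] := key b hb.
have agree : forall v, Y v -> ub v = ua v.
  move=> v Yv; have [_ [bY _]] := hb.
  have e1 := bY v Yv; rewrite -(aY v Yv) eb ea /= in e1.
  exact: (addIr (ga v)).
have dub : dnorm ub = c by apply: nb => //; rewrite -eb.
have [cs hcs] := hgs _ (HBu ub pub agree dub).
exists (fun i => c * cs i) => x; rewrite eb ea /=.
have -> : ub x + ga x - (ua x + ga x) = c * (ub x / c - ua x / c) by field.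
by rewrite hcs mulr_sumr; apply: eq_bigr => i _; rewrite mulrA.
Qed.
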